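(* Let $\kappa=7/8$ and $9/10<\alpha<1$. Define on $[-\pi,\pi]$ (extended $2\pi$-periodically) $\bar\omega_\alpha=\mathrm{sgn}(x)|\sin x|^\alpha$, $\bar u_\alpha=\mathrm{sgn}(x)|\sin x|^{(1+\alpha)/2}$, let $\bar\psi_\alpha$ be the odd $2\pi$-periodic solution of $-\bar\psi_\alpha''=\bar\omega_\alpha$, and set $\omega_{\mathrm{res}}=\bar\omega_\alpha-\sin x$, $u_{\mathrm{res}}=\bar u_\alpha-\sin x$, $\psi_{\mathrm{res}}=\bar\psi_\alpha-\sin x$. Then, with constants independent of $\alpha$: (1) $|\partial_x^i\omega_{\mathrm{res}}|+|\partial_x^iu_{\mathrm{res}}|\lesssim|\alpha-1|\,|\sin x|^{\kappa-i}$ for $i=0,1,2,3$, and $\|\psi_{\mathrm{res}}\|_{L^\infty}+\|\psi_{\mathrm{res},x}\|_{L^\infty}\lesssim|\alpha-1|$; (2) $\big|\tfrac{\alpha-1}{2}\bar u_{\alpha,x}-\sin x\,u_{\mathrm{res},xx}\big|+\big|\sin x\,\partial_x\big[\tfrac{\alpha-1}{2}\bar u_{\alpha,x}-\sin x\,u_{\mathrm{res},xx}\big]\big|\lesssim|\alpha-1|^{1/2}|x|\,|\sin x|^{\alpha-1}$ for $x\in[-\pi,\pi]\setminus\{0,\pm\pi\}$.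
   Context: Subscripts $x$ denote derivatives in $x$. *)

(* Defs.v *)
From Stdlib Require Import Reals Lra.
From Coquelicot Require Import Coquelicot.
Open Scope R_scope.

Definition kappa : R := 7 / 8.

Definition sgnpow (a y : R) : R :=
  if Rlt_dec 0 y then Rpower y a
  else if Rlt_dec y 0 then - Rpower (- y) a
  else 0.

(* omegabar_alpha = sgn(x)|sin x|^alpha on [-pi,pi], 2pi-periodically extended,
   i.e. sgn(sin x) |sin x|^alpha on all of R *)
Definition omegabar (alpha x : R) : R := sgnpow alpha (sin x).

Definition ubar (alpha x : R) : R := sgnpow ((1 + alpha) / 2) (sin x).

Definition omega_res (alpha x : R) : R := omegabar alpha x - sin x.
Definition u_res (alpha x : R) : R := ubar alpha x - sin x.

Definition is_psibar (alpha : R) (psi : R -> R) : Prop :=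
  (forall x, psi (- x) = - psi x) /\
  (forall x, psi (x + 2 * PI) = psi x) /\
  (forall x, ex_derive psi x) /\
  (forall x, is_derive (Derive psi) x (- omegabar alpha x)).

Definition gexpr (alpha x : R) : R :=
  (alpha - 1) / 2 * Derive (ubar alpha) x - sin x * Derive_n (u_res alpha) 2 x.

(* Main.v *)
Require Import Defs.
From Stdlib Require Import Reals Lra Lia.
From Coquelicot Require Import Coquelicot.
Open Scope R_scope.

Lemma loc_sin y : sin y <> 0 -> locally y (fun t => sin t <> 0).
Proof.
  intro H.
  assert (Hc : filterlim sin (locally y) (locally (sin y))) by (apply continuity_pt_filterlim, continuity_sin).
  apply (Hc (fun z => z <> 0)).
  assert (Hp : 0 < Rabs (sin y)) by (apply Rabs_pos_lt; auto).
  exists (mkposreal _ Hp). intros z Hz.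
  change (Rabs (z - sin y) < Rabs (sin y)) in Hz.
  intro Hz0. rewrite Hz0 in Hz. rewrite Rminus_0_l, Rabs_Ropp in Hz. lra.
Qed.

Lemma Dn_chain (U : R -> Prop) (f : R -> R) (F : nat -> R -> R) (n : nat) :
 (forall y, U y -> locally y U) -> (forall y, U y -> f y = F 0%nat y) ->
 (forall k y, (k < n)%nat -> U y -> is_derive (F k) y (F (S k) y)) ->
 forall k y, (k <= n)%nat -> U y -> Derive_n f k y = F k y.
Proof.
  intros HU H0 HD. induction k; intros y Hk Hy.
  - simpl. auto.
  - simpl. rewrite (Derive_ext_loc _ (F k)).
    + apply is_derive_unique, HD; auto; lia.
    + apply filter_imp with U; [|apply HU; auto].
      intros t Ht. apply IHk; auto; lia.
Qed.

Definition Pw (a y : R) := exp ((a - 1) * (ln (sin y ^ 2) / 2)).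

Lemma sgnpow_P a s : s <> 0 -> sgnpow a s = s * exp ((a - 1) * (ln (s ^ 2) / 2)).
Proof.
  intro H. unfold sgnpow, Rpower.
  destruct (Rlt_dec 0 s) as [Hs|Hs].
  - rewrite ln_pow by auto. simpl INR.
    rewrite <- (exp_ln s) at 2 by auto. rewrite <- exp_plus. f_equal. field.
  - destruct (Rlt_dec s 0) as [Hs'|Hs']; [|lra].
    replace (s ^ 2) with ((- s) ^ 2) by ring.
    rewrite ln_pow by lra. simpl INR.
    replace (a * ln (- s)) with (ln (- s) + (a - 1) * ((1 + 1) * ln (- s) / 2)) by field.
    rewrite exp_plus, exp_ln by lra. ring.
Qed.

Definition F0 a y := sin y * Pw a y - sin y.
Definition F1 a y := a * cos y * Pw a y - cos y.
Definition F2 a y := a * (a - 1) * Pw a y * cos y ^ 2 / sin y - a * sin y * Pw a y + sin y.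
Definition F3 a y := a * (a - 1) * (a - 2) * Pw a y * cos y ^ 3 / sin y ^ 2
   - a * (3 * a - 2) * cos y * Pw a y + cos y.
Definition Fn a (n : nat) := match n with O => F0 a | 1%nat => F1 a | 2%nat => F2 a | _ => F3 a end.

Ltac dtac H := unfold Pw; auto_derive; [repeat split; auto; nra |
  change (sin ?y * (sin ?y * 1)) with (sin y ^ 2);
  set (E := exp _); field; auto].

Lemma dF0 a y : sin y <> 0 -> is_derive (F0 a) y (F1 a y).
Proof. intro H. unfold F0, F1. dtac H. Qed.
Lemma dF1 a y : sin y <> 0 -> is_derive (F1 a) y (F2 a y).
Proof. intro H. unfold F1, F2. dtac H. Qed.
Lemma dF2 a y : sin y <> 0 -> is_derive (F2 a) y (F3 a y).
Proof. intro H. unfold F2, F3. dtac H. Qed.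

Lemma res_Dn a k y : (k <= 3)%nat -> sin y <> 0 ->
  Derive_n (fun x => sgnpow a (sin x) - sin x) k y = Fn a k y.
Proof.
  intros Hk Hy. apply (Dn_chain (fun t => sin t <> 0) _ (Fn a) 3); auto.
  - apply loc_sin.
  - intros t Ht. simpl. unfold F0, Pw. rewrite sgnpow_P; auto.
  - intros j t Hj Ht. destruct j as [|[|[|]]]; simpl.
    apply dF0; auto. apply dF1; auto. apply dF2; auto. lia.
Qed.
Lemma expfacts m e : 0 <= m -> 0 <= e <= 1/10 ->
  1 <= exp (e*m) /\ exp (e*m) - 1 <= e*m*exp (e*m) /\ m*exp (e*m) <= 40*exp (m/8)
  /\ exp (e*m) <= exp (m/8) /\ 1 <= exp (m/8) /\ exp (m/8) <= exp m.
Proof.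
  intros Hm He.
  assert (Hle : forall x y, x <= y -> exp x <= exp y).
  { intros x y Hxy. destruct Hxy as [Hxy|Hxy]. left; apply exp_increasing; auto. right; subst; auto. }
  assert (H1 : 1 <= exp (e*m)) by (rewrite <- exp_0; apply Hle; nra).
  split; [auto|]. split.
  { pose proof (exp_ineq1_le (- (e*m))).
    assert (exp (- (e*m)) * exp (e*m) = 1) by (rewrite <- exp_plus, <- exp_0; f_equal; ring).
    nra. }
  split.
  { pose proof (exp_ineq1_le (m/40)).
    assert (exp (e*m) <= exp (m/10)) by (apply Hle; nra).
    assert (exp (m/8) = exp (m/40) * exp (m/10)) by (rewrite <- exp_plus; f_equal; field).
    assert (0 < exp (m/10)) by apply exp_pos.
    nra. }
  split. apply Hle; nra. split. rewrite <- exp_0; apply Hle; nra. apply Hle; nra.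
Qed.
Section Bnd.
Variables (s c P t T R8 m e : R).
Hypotheses (Hs : Rabs s = t) (Ht : 0 < t <= 1) (HT : t * T = 1) (Hc : Rabs c <= 1)
  (He : 0 <= e <= 1/10) (Hm : 0 <= m) (HP1 : 1 <= P) (HP2 : P - 1 <= e*m*P)
  (HP3 : m * P <= 40 * R8) (HP4 : P <= R8) (HR1 : 1 <= R8) (HR2 : R8 <= T).

Lemma T1 : 1 <= T. Proof. nra. Qed.
Lemma Rabs_le' x y : -y <= x <= y -> Rabs x <= y.
Proof. intros; apply Rabs_le; lra. Qed.
Lemma cc : c^2 <= 1.
Proof. pose proof (Rabs_pos c). replace (c^2) with (Rabs c * Rabs c). nra. rewrite <- Rabs_mult. rewrite Rabs_pos_eq by nra. ring. Qed.

Lemma emP : e*m*P <= 40*e*R8.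
Proof. assert (e*(m*P) <= e*(40*R8)) by (apply Rmult_le_compat_l; lra). nra. Qed.
Lemma KaP : Rabs ((1-e)*P - 1) <= 41 * e * R8.
Proof. pose proof emP. apply Rabs_le'. assert (e*P <= e*R8) by (apply Rmult_le_compat_l; lra). nra. Qed.
Lemma K3 : Rabs ((1-e)*(3*(1-e)-2)*P - 1) <= 44 * e * R8.
Proof. pose proof emP. apply Rabs_le'.
  assert (e*P <= e*R8) by (apply Rmult_le_compat_l; lra).
  assert (0 <= (1-e)*(3*(1-e)-2) <= 1) by nra.
  assert (0 <= (1-e)*(3*(1-e)-2)*(P-1) <= P - 1) by nra.
  assert (-4*e <= (1-e)*(3*(1-e)-2) - 1 <= 4*e) by nra.
  assert (e <= e*R8) by nra.
  replace ((1-e)*(3*(1-e)-2)*P - 1) with ((1-e)*(3*(1-e)-2)*(P-1) + ((1-e)*(3*(1-e)-2) - 1)) by ring.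
  lra. Qed.

Lemma B0 : Rabs (s*P - s) <= 50 * e * (R8 * t).
Proof. replace (s*P - s) with (s * (P-1)) by ring. rewrite Rabs_mult, Hs.
  rewrite (Rabs_pos_eq (P-1)) by lra. pose proof emP.
  assert (t*(P-1) <= t*(40*e*R8)) by (apply Rmult_le_compat_l; lra).
  assert (0 <= e*R8*t) by (apply Rmult_le_pos; [apply Rmult_le_pos|]; lra). nra. Qed.

Lemma B1 : Rabs ((1-e)*c*P - c) <= 50 * e * R8.
Proof. replace ((1-e)*c*P - c) with (c * ((1-e)*P - 1)) by ring. rewrite Rabs_mult.
  pose proof KaP. pose proof (Rabs_pos c). pose proof (Rabs_pos ((1 - e) * P - 1)). nra. Qed.

Lemma invs : Rabs (/ s) = T.
Proof. rewrite Rabs_inv, Hs. field_simplify_eq. lra. lra. Qed.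

Lemma B2 : s <> 0 -> Rabs ((1-e)*((1-e)-1)*P*c^2/s - (1-e)*s*P + s) <= 50 * e * (R8 * T).
Proof. intro Hs0.
  replace ((1-e)*((1-e)-1)*P*c^2/s - (1-e)*s*P + s) with
    (((1-e)*(-e)*P*c^2) * / s + (- s) * ((1-e)*P - 1)) by (field; auto).
  assert (Rabs ((1-e)*(-e)*P*c^2) <= e * R8).
  { pose proof cc. pose proof (pow2_ge_0 c).
    assert (0 <= e*P) by nra. assert (e*P*c^2 <= e*P) by nra.
    assert (e*P <= e*R8) by nra. assert (0 <= e*P*c^2) by (apply Rmult_le_pos; lra).
    assert (0 <= (1-e)*(e*P*c^2) <= e*P*c^2) by (split; nra).
    apply Rabs_le'. split; nra. }
  set (X := (1-e)*(-e)*P*c^2) in *. set (Y := (1-e)*P - 1).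
  eapply Rle_trans. apply Rabs_triang. rewrite !Rabs_mult, Rabs_Ropp, Hs, invs.
  pose proof KaP. pose proof T1. fold Y in H0.
  pose proof (Rabs_pos Y). pose proof (Rabs_pos X).
  assert (Rabs X * T <= e*R8*T) by (apply Rmult_le_compat_r; lra).
  assert (t * Rabs Y <= 1 * (41*e*R8)) by (apply Rmult_le_compat; lra).
  assert (0 <= e*R8) by nra. assert (e*R8 <= e*R8*T) by nra. nra. Qed.

Lemma B3 : s <> 0 -> Rabs ((1-e)*((1-e)-1)*((1-e)-2)*P*c^3/s^2 - (1-e)*(3*(1-e)-2)*c*P + c)
   <= 50 * e * (R8 * T * T).
Proof. intro Hs0.
  replace ((1-e)*((1-e)-1)*((1-e)-2)*P*c^3/s^2 - (1-e)*(3*(1-e)-2)*c*P + c) with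
    (((1-e)*(-e)*((1-e)-2)*P*c^3) * (/ s * / s) + (- c) * ((1-e)*(3*(1-e)-2)*P - 1)) by (field; auto).
  pose proof K3. pose proof cc. pose proof T1. pose proof (Rabs_pos c).
  assert (HX : Rabs ((1-e)*(-e)*((1-e)-2)*P*c^3) <= 2 * e * R8).
  { assert (Rabs (c^3) <= 1).
    { rewrite <- RPow_abs. assert (Rabs c ^ 2 <= 1) by nra. simpl. nra. }
    assert (HQ : Rabs ((1-e)*(-e)*((1-e)-2)*P) <= 2*e*R8).
    { assert (0 <= e*P) by nra. assert (e*P <= e*R8) by nra.
      assert (0 <= (1-e)*(2-(1-e)) <= 2) by nra.
      assert (0 <= ((1-e)*(2-(1-e)))*(e*P) <= 2*(e*P)) by (split; nra).
      apply Rabs_le'. split; nra. }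
    rewrite Rabs_mult. pose proof (Rabs_pos (c^3)). pose proof (Rabs_pos ((1-e)*(-e)*((1-e)-2)*P)).
    assert (Rabs ((1-e)*(-e)*((1-e)-2)*P) * Rabs (c^3) <= (2*e*R8) * 1) by (apply Rmult_le_compat; lra).
    lra. }
  set (X := (1-e)*(-e)*((1-e)-2)*P*c^3) in *. set (Y := (1-e)*(3*(1-e)-2)*P - 1) in *.
  eapply Rle_trans. apply Rabs_triang. rewrite !Rabs_mult, Rabs_Ropp, invs.
  pose proof (Rabs_pos Y). pose proof (Rabs_pos X).
  assert (Rabs X * (T * T) <= 2*e*R8*(T*T)) by (apply Rmult_le_compat_r; nra).
  assert (Rabs c * Rabs Y <= 1 * (44*e*R8)) by (apply Rmult_le_compat; lra).
  assert (0 <= e*R8) by nra. assert (1 <= T*T) by nra. assert (e*R8 <= e*R8*(T*T)) by nra. nra. Qed.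
End Bnd.

Lemma setup a x : 9/10 <= a <= 1 -> sin x <> 0 -> exists t T R8 m,
  Rabs (sin x) = t /\ 0 < t <= 1 /\ t*T = 1 /\ 0 <= m /\ 1 <= Pw a x /\
  Pw a x - 1 <= (1-a)*m*Pw a x /\ m*Pw a x <= 40*R8 /\ Pw a x <= R8 /\ 1 <= R8 /\ R8 <= T /\
  (forall b, Rpower (Rabs (sin x)) b = exp (- b * m)) /\ T = exp m /\ R8 = exp (m/8) /\
  t = exp (- m) /\ Pw a x = exp ((1-a)*m).
Proof.
  intros Ha Hs.
  set (t := Rabs (sin x)). set (m := - ln t).
  assert (Ht : 0 < t) by (apply Rabs_pos_lt; auto).
  assert (Ht1 : t <= 1) by (unfold t; apply Rabs_le; apply SIN_bound).
  assert (Hm : 0 <= m).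
  { unfold m. assert (ln t <= ln 1) by (apply ln_le; lra). rewrite ln_1 in H. lra. }
  assert (HPw : Pw a x = exp ((1-a)*m)).
  { unfold Pw, m. f_equal. replace (sin x ^ 2) with (t ^ 2) by (unfold t; rewrite pow2_abs; auto).
    rewrite ln_pow by auto. simpl INR. field. }
  assert (Htm : t = exp (- m)) by (unfold m; rewrite Ropp_involutive, exp_ln; auto).
  destruct (expfacts m (1-a)) as (H1 & H2 & H3 & H4 & H5 & H6); auto; try lra.
  exists t, (exp m), (exp (m/8)), m. rewrite HPw.
  repeat split; auto; try lra.
  - rewrite Htm, <- exp_plus. replace (-m + m) with 0 by ring. apply exp_0.
  - intro b. unfold Rpower. fold t. f_equal. unfold m. ring.
Qed.

Lemma res_bound a x i : 9/10 <= a < 1 -> sin x <> 0 -> (i <= 3)%nat ->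
  Rabs (Derive_n (fun y => sgnpow a (sin y) - sin y) i x)
  <= 50 * (1-a) * Rpower (Rabs (sin x)) (kappa - INR i).
Proof.
  intros Ha Hs Hi. rewrite res_Dn by auto.
  destruct (setup a x) as (t & T & R8 & m & Hst & Ht & HT & Hm & HP1 & HP2 & HP3 & HP4 & HR1 & HR2 & HRp & HTe & HR8 & Htm & HPe); [lra|auto|].
  assert (Hc : Rabs (cos x) <= 1) by (apply Rabs_le; apply COS_bound).
  rewrite HRp. unfold kappa.
  remember (1 - a) as e eqn:He0. assert (Ea : a = 1 - e) by lra. subst a.
  assert (He : 0 <= e <= 1/10) by lra.
  destruct i as [|[|[|[|]]]]; simpl Fn; [..|lia].
  - replace (exp (- (7/8 - INR 0) * m)) with (R8 * t) by (rewrite HR8, Htm, <- exp_plus; f_equal; simpl; field).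
    unfold F0. eapply B0; eauto.
  - replace (exp (- (7/8 - INR 1) * m)) with R8 by (rewrite HR8; f_equal; simpl; field).
    unfold F1. eapply B1; eauto.
  - replace (exp (- (7/8 - INR 2) * m)) with (R8 * T) by (rewrite HR8, HTe, <- exp_plus; f_equal; simpl; field).
    unfold F2. eapply B2; eauto.
  - replace (exp (- (7/8 - INR 3) * m)) with (R8 * T * T) by (rewrite HR8, HTe, <- !exp_plus; f_equal; simpl; field).
    unfold F3. eapply B3; eauto.
Qed.
Lemma Rabs_le2 x y : -y <= x <= y -> Rabs x <= y.
Proof. intros; apply Rabs_le; lra. Qed.

Section GB.
Variables (s c P t R8 m e x : R).
Hypotheses (Hs : Rabs s = t) (Ht : 0 < t <= 1) (Htx : t <= Rabs x) (Hc : Rabs c <= 1)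
  (Hc1 : 0 <= 1 - c <= 2 * Rabs x)
  (He : 0 <= e <= 1/10) (Hm : 0 <= m) (HP1 : 1 <= P) (HP2 : P - 1 <= e*m*P)
  (HP3 : m * P <= 40 * R8) (HP4 : P <= R8) (HR1 : 1 <= R8) (HtR : t * R8 <= 1).

Lemma KaP' : Rabs ((1-e)*P - 1) <= 41 * e * R8.
Proof. assert (e*(m*P) <= e*(40*R8)) by (apply Rmult_le_compat_l; lra).
  assert (e*P <= e*R8) by (apply Rmult_le_compat_l; lra). apply Rabs_le2. nra. Qed.

Lemma s2b : Rabs (s^2 * ((1-e)*P - 1)) <= 41 * e * Rabs x.
Proof. pose proof KaP'. rewrite Rabs_mult, <- RPow_abs, Hs.
  pose proof (Rabs_pos ((1-e)*P - 1)).
  assert (t^2 * Rabs ((1-e)*P - 1) <= t^2 * (41*e*R8)) by (apply Rmult_le_compat_l; nra).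
  assert (t^2*(41*e*R8) = 41*e*t*(t*R8)) by ring.
  assert (41*e*t*(t*R8) <= 41*e*t*1) by (apply Rmult_le_compat_l; nra).
  assert (41*e*t <= 41*e*Rabs x) by (apply Rmult_le_compat_l; lra). nra. Qed.

Lemma mul_bnd u v U V : Rabs u <= U -> Rabs v <= V -> Rabs (u*v) <= U*V.
Proof. intros. rewrite Rabs_mult. apply Rmult_le_compat; auto; apply Rabs_pos. Qed.

Lemma cabs : -1 <= c <= 1.
Proof. unfold Rabs in Hc. destruct Rcase_abs; lra. Qed.

Lemma s2x : Rabs (s^2) <= Rabs x.
Proof. rewrite <- RPow_abs, Hs. nra. Qed.

Lemma eP : Rabs (e*P) <= e*P.
Proof. rewrite Rabs_pos_eq; nra. Qed.

Lemma Gbound :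
  Rabs ((1-e)*(-e)*P*c*(1-c) + s^2*((1-e)*P - 1)) +
  Rabs ((1-e)*e^2*P*c^2*(1-c) + (1-e)*(-e)*P*s^2*(2*c-1) + 2*s^2*c*((1-e)*P - 1)
        + (1-e)*(-e)*s^2*P*c) <= 131 * e * Rabs x * P.
Proof.
  pose proof cabs. pose proof s2b. pose proof s2x. pose proof eP. pose proof (Rabs_pos x).
  assert (Ta : Rabs ((1-e)*(-e)*P*c*(1-c)) <= (e*P) * (2*Rabs x)).
  { replace ((1-e)*(-e)*P*c*(1-c)) with ((e*P) * (-(1-e)*c*(1-c))) by ring.
    apply mul_bnd; auto. apply Rabs_le2.
    assert (-1 <= (1-e)*c <= 1) by (split; nra).
    assert (0 <= (1 - (1-e)*c)*(1-c)) by (apply Rmult_le_pos; lra).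
    assert (0 <= (1 + (1-e)*c)*(1-c)) by (apply Rmult_le_pos; lra).
    split; nra. }
  assert (Tb : Rabs ((1-e)*e^2*P*c^2*(1-c)) <= (e*P) * (2*Rabs x)).
  { replace ((1-e)*e^2*P*c^2*(1-c)) with ((e*P) * ((1-e)*e*c^2*(1-c))) by ring.
    apply mul_bnd; auto. apply Rabs_le2. assert (0 <= c^2 <= 1) by nra.
    assert (0 <= (1-e)*e <= 1) by nra. assert (0 <= ((1-e)*e)*c^2 <= 1) by nra. split; nra. }
  assert (Tc : Rabs ((1-e)*(-e)*P*s^2*(2*c-1)) <= (e*P) * (3 * Rabs x)).
  { replace ((1-e)*(-e)*P*s^2*(2*c-1)) with ((e*P) * ((-(1-e)*(2*c-1)) * s^2)) by ring.
    apply mul_bnd; auto. apply mul_bnd; auto. apply Rabs_le2. split; nra. }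
  assert (Td : Rabs (2*s^2*c*((1-e)*P - 1)) <= 2 * (41*e*Rabs x)).
  { replace (2*s^2*c*((1-e)*P - 1)) with ((2*c) * (s^2*((1-e)*P - 1))) by ring.
    apply mul_bnd; auto. apply Rabs_le2. split; nra. }
  assert (Tf : Rabs ((1-e)*(-e)*s^2*P*c) <= (e*P) * (1 * Rabs x)).
  { replace ((1-e)*(-e)*s^2*P*c) with ((e*P) * ((-(1-e)*c) * s^2)) by ring.
    apply mul_bnd; auto. apply mul_bnd; auto. apply Rabs_le2. split; nra. }
  assert (e * Rabs x <= e * Rabs x * P).
  { assert (0 <= e * Rabs x) by nra. nra. }
  pose proof (Rabs_triang ((1-e)*(-e)*P*c*(1-c)) (s^2*((1-e)*P - 1))).
  pose proof (Rabs_triang ((1-e)*e^2*P*c^2*(1-c) + (1-e)*(-e)*P*s^2*(2*c-1) + 2*s^2*c*((1-e)*P - 1)) ((1-e)*(-e)*s^2*P*c)).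
  pose proof (Rabs_triang ((1-e)*e^2*P*c^2*(1-c) + (1-e)*(-e)*P*s^2*(2*c-1)) (2*s^2*c*((1-e)*P - 1))).
  pose proof (Rabs_triang ((1-e)*e^2*P*c^2*(1-c)) ((1-e)*(-e)*P*s^2*(2*c-1))).
  lra.
Qed.
End GB.

Lemma abs_sin_le z : Rabs (sin z) <= Rabs z.
Proof.
  pose proof PI2_1. pose proof (SIN_bound z).
  destruct (Rtotal_order z 0) as [Hz|[Hz|Hz]].
  - destruct (Rle_lt_dec z (-1)).
    + rewrite (Rabs_left z) by lra. apply Rabs_le; lra.
    + assert (0 < sin (-z)) by (apply sin_gt_0; lra).
      assert (sin (-z) < -z) by (apply sin_lt_x; lra).
      rewrite sin_neg in *. rewrite Rabs_left by lra. rewrite Rabs_left by lra. lra.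
  - subst. rewrite sin_0. lra.
  - destruct (Rle_lt_dec 1 z).
    + rewrite (Rabs_right z) by lra. apply Rabs_le; lra.
    + assert (0 < sin z) by (apply sin_gt_0; lra).
      assert (sin z < z) by (apply sin_lt_x; lra).
      rewrite !Rabs_right by lra. lra.
Qed.

Lemma one_m_cos z : Rabs z <= 4 -> 0 <= 1 - cos z <= 2 * Rabs z.
Proof.
  intro Hz. pose proof (COS_bound z). split; [lra|].
  replace z with (2 * (z/2)) at 1 by field. rewrite cos_2a_sin.
  pose proof (abs_sin_le (z/2)).
  assert (Rabs (z/2) = Rabs z / 2) by (unfold Rdiv; rewrite Rabs_mult, Rabs_inv, (Rabs_right 2) by lra; auto).
  assert (sin (z/2) * sin (z/2) = Rabs (sin (z/2)) * Rabs (sin (z/2))) by (rewrite <- Rabs_mult, Rabs_right; [auto| nra]).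
  pose proof (Rabs_pos (sin (z/2))). pose proof (Rabs_pos z). nra.
Qed.

Lemma sin_nz x : - PI <= x <= PI -> x <> 0 -> x <> PI -> x <> - PI -> sin x <> 0.
Proof.
  intros H1 H2 H3 H4. destruct (Rtotal_order x 0) as [Hx|[Hx|Hx]].
  - assert (sin x < 0) by (apply sin_lt_0_var; lra). lra.
  - lra.
  - assert (0 < sin x) by (apply sin_gt_0; lra). lra.
Qed.

Definition Gf al y := (al-1)/2 * ((1+al)/2 * cos y * Pw ((1+al)/2) y) - sin y * F2 ((1+al)/2) y.
Definition Gd al y :=
  ((1+al)/2*((1+al)/2-1)^2*Pw ((1+al)/2) y*cos y^2*(1-cos y)
   + (1+al)/2*((1+al)/2-1)*Pw ((1+al)/2) y*sin y^2*(2*cos y-1)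
   + 2*sin y^2*cos y*((1+al)/2*Pw ((1+al)/2) y-1)
   + (1+al)/2*((1+al)/2-1)*sin y^2*Pw ((1+al)/2) y*cos y)/sin y.

Lemma dH b y : sin y <> 0 -> is_derive (fun t => sin t * Pw b t) y (b * cos y * Pw b y).
Proof. intro H. dtac H. Qed.

Lemma dGf al y : sin y <> 0 -> is_derive (Gf al) y (Gd al y).
Proof. intro H. unfold Gf, Gd, F2. dtac H. Qed.

Lemma gexpr_loc al y : sin y <> 0 -> gexpr al y = Gf al y.
Proof.
  intro Hy. unfold gexpr, Gf. f_equal.
  - f_equal. rewrite (Derive_ext_loc _ (fun t => sin t * Pw ((1+al)/2) t)).
    + apply is_derive_unique, dH; auto.
    + apply filter_imp with (fun t => sin t <> 0); [|apply loc_sin; auto].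
      intros t Ht. unfold ubar, Pw. rewrite sgnpow_P; auto.
  - f_equal. unfold u_res, ubar. apply (res_Dn _ 2); auto.
Qed.

Lemma Dgexpr al y : sin y <> 0 -> Derive (gexpr al) y = Gd al y.
Proof.
  intro Hy. rewrite (Derive_ext_loc _ (Gf al)).
  - apply is_derive_unique, dGf; auto.
  - apply filter_imp with (fun t => sin t <> 0); [|apply loc_sin; auto].
    intros t Ht. apply gexpr_loc; auto.
Qed.

Lemma le_sqrt u : 0 <= u <= 1 -> u <= sqrt u.
Proof. intros. rewrite <- (sqrt_pow2 u) at 1 by lra. apply sqrt_le_1; nra. Qed.

Lemma part2 al x : 9/10 < al < 1 -> - PI <= x <= PI -> x <> 0 -> x <> PI -> x <> - PI ->
  Rabs (gexpr al x) + Rabs (sin x * Derive (gexpr al) x)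
  <= 100 * sqrt (Rabs (al - 1)) * Rabs x * Rpower (Rabs (sin x)) (al - 1).
Proof.
  intros Hal Hx H0 H1 H2.
  assert (Hs : sin x <> 0) by (apply sin_nz; auto).
  rewrite gexpr_loc, Dgexpr by auto.
  destruct (setup ((1+al)/2) x) as (t & T & R8 & m & Hst & Ht & HT & Hm & HP1 & HP2 & HP3 & HP4 & HR1 & HR2 & HRp & HTe & HR8 & Htm & HPe); [lra|auto|].
  set (P := Pw ((1+al)/2) x) in *.
  set (e := (1 - al)/2).
  replace (1 - (1+al)/2) with e in * by (unfold e; field).
  assert (E1 : Gf al x = (1-e)*(-e)*P*cos x*(1-cos x) + sin x^2*((1-e)*P - 1)).
  { unfold Gf, F2. fold P. unfold e. field. auto. }
  assert (E2 : sin x * Gd al x = (1-e)*e^2*P*cos x^2*(1-cos x) + (1-e)*(-e)*P*sin x^2*(2*cos x-1)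
      + 2*sin x^2*cos x*((1-e)*P - 1) + (1-e)*(-e)*sin x^2*P*cos x).
  { unfold Gd. fold P. unfold e. field. auto. }
  rewrite E1, E2.
  pose proof PI_4.
  assert (Hxa : Rabs x <= 4) by (apply Rabs_le; lra).
  assert (Hb : Rabs (1 - cos x) <= 0 \/ True) by auto.
  eapply Rle_trans.
  { apply (Gbound (sin x) (cos x) P t R8 m e x); auto.
    - rewrite <- Hst. apply abs_sin_le.
    - apply Rabs_le; apply COS_bound.
    - apply one_m_cos; auto.
    - unfold e; lra.
    - nra. }
  rewrite HRp.
  assert (HP2' : exp (- (al - 1) * m) = P * P) by (rewrite HPe, <- exp_plus; f_equal; unfold e; field).
  rewrite HP2'.
  rewrite (Rabs_left1 (al - 1)) by lra.
  assert (Hsq : 1 - al <= sqrt (1 - al)) by (apply le_sqrt; lra).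
  replace (- (al - 1)) with (1 - al) by ring.
  assert (0 <= Rabs x) by apply Rabs_pos.
  assert (P <= P * P) by nra.
  assert (131 * e <= 100 * sqrt (1 - al)) by (unfold e; lra).
  assert (0 <= Rabs x * P) by nra.
  assert (131 * e * (Rabs x * P) <= 100 * sqrt (1 - al) * (Rabs x * P)) by (apply Rmult_le_compat_r; lra).
  assert (0 <= 100 * sqrt (1 - al) * Rabs x) by (pose proof (sqrt_pos (1-al)); nra).
  assert (100 * sqrt (1 - al) * Rabs x * P <= 100 * sqrt (1 - al) * Rabs x * (P * P)) by (apply Rmult_le_compat_l; lra).
  nra.
Qed.

Lemma periodic_ext (Q : R -> Prop) : (forall z, -PI <= z <= PI -> Q z) ->
  (forall z, Q z -> Q (z + 2*PI)) -> (forall z, Q (z + 2*PI) -> Q z) -> forall z, Q z.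
Proof.
  intros H0 Hf Hb.
  assert (HPI : 0 < PI) by apply PI_RGT_0.
  assert (Hn : forall n, forall z, -PI - 2*PI*INR n <= z <= PI + 2*PI*INR n -> Q z).
  { induction n; intros z Hz.
    - simpl in Hz. apply H0. lra.
    - rewrite S_INR in Hz. pose proof (pos_INR n).
      destruct (Rlt_le_dec (PI + 2*PI*INR n) z).
      + replace z with ((z - 2*PI) + 2*PI) by ring. apply Hf, IHn. nra.
      + destruct (Rlt_le_dec z (-PI - 2*PI*INR n)).
        * apply Hb, IHn. nra.
        * apply IHn. lra. }
  intro z. destruct (INR_archimed (2*PI) (Rabs z)) as [n Hn']; [lra|].
  apply (Hn n).
  unfold Rabs in Hn'. destruct Rcase_abs in Hn'; lra.
Qed.

Lemma omres_bound a y : 9/10 <= a < 1 -> Rabs (sgnpow a (sin y) - sin y) <= 50*(1-a).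
Proof.
  intro Ha. destruct (Req_dec (sin y) 0) as [H|H].
  - rewrite H. unfold sgnpow. destruct (Rlt_dec 0 0); [lra|].
    rewrite Rminus_0_r, Rabs_R0. lra.
  - pose proof (res_bound a y 0 Ha H (Nat.le_0_l _)) as Hb. simpl in Hb.
    eapply Rle_trans; [apply Hb|].
    assert (Rpower (Rabs (sin y)) (kappa - 0) <= 1).
    { unfold Rpower. rewrite <- exp_0.
      assert (0 < Rabs (sin y)) by (apply Rabs_pos_lt; auto).
      assert (Rabs (sin y) <= 1) by (apply Rabs_le; apply SIN_bound).
      assert (ln (Rabs (sin y)) <= ln 1) by (apply ln_le; lra). rewrite ln_1 in *.
      assert (Hk : (kappa - 0) * ln (Rabs (sin y)) <= 0) by (unfold kappa; nra).
      destruct Hk as [Hk|Hk]. left; apply exp_increasing; auto. rewrite Hk; lra. }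
    assert (0 <= Rpower (Rabs (sin y)) (kappa - 0)) by (unfold Rpower; left; apply exp_pos).
    nra.
Qed.

Lemma psi_part a psi : 9/10 <= a < 1 -> is_psibar a psi -> forall x y,
  Rabs (psi x - sin x) + Rabs (Derive (fun t => psi t - sin t) y) <= 2000*(1-a).
Proof.
  intros Ha (Hodd & Hper & Hex & Hd2).
  set (M := 50*(1-a)).
  set (h := fun t => psi t - sin t). set (h1 := fun t => Derive psi t - cos t).
  assert (HPI : 0 < PI) by apply PI_RGT_0. pose proof PI_4.
  assert (Hh : forall t, is_derive h t (h1 t)).
  { intro t. apply (is_derive_minus psi sin). apply Derive_correct, Hex.
    auto_derive; auto; ring. }
  assert (Hh1 : forall t, is_derive h1 t (-(sgnpow a (sin t) - sin t))).
  { intro t. replace (-(sgnpow a (sin t) - sin t)) with (- omegabar a t - - sin t) by (unfold omegabar; ring).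
    apply (is_derive_minus (Derive psi) cos). apply Hd2. auto_derive; auto; ring. }
  assert (Hw : forall t, Rabs (-(sgnpow a (sin t) - sin t)) <= M).
  { intro t. rewrite Rabs_Ropp. apply omres_bound; auto. }
  assert (Cont : forall (f : R -> R) (df t : R), is_derive f t df -> continuity_pt f t).
  { intros f df t Hd. apply derivable_continuous_pt. exists df. apply is_derive_Reals; auto. }
  assert (H0 : h 0 = 0).
  { unfold h. pose proof (Hodd 0) as E. rewrite Ropp_0 in E. rewrite sin_0. lra. }
  assert (Hpi : h PI = 0).
  { unfold h. pose proof (Hper (-PI)) as E. replace (-PI + 2*PI) with PI in E by ring.
    rewrite Hodd in E. rewrite sin_PI. lra. }
  destruct (MVT_gen h 0 PI h1) as [c [Hc Hc']].
  { intros t _. apply Hh. }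
  { intros t _. apply (Cont _ (h1 t)), Hh. }
  rewrite Rmin_left, Rmax_right in Hc by lra.
  rewrite H0, Hpi in Hc'.
  assert (Hh1c : h1 c = 0).
  { assert (h1 c * PI = 0) by lra. apply Rmult_integral in H1. destruct H1; lra. }
  assert (B1 : forall z, -PI <= z <= PI -> Rabs (h1 z) <= 8*M).
  { intros z Hz. destruct (MVT_gen h1 c z (fun t => -(sgnpow a (sin t) - sin t))) as [d [_ Hd]].
    { intros t _. apply Hh1. }
    { intros t _. apply (Cont _ _ _ (Hh1 t)). }
    rewrite Hh1c, Rminus_0_r in Hd. rewrite Hd, Rabs_mult.
    assert (Rabs (z - c) <= 8) by (apply Rabs_le; lra).
    pose proof (Hw d). pose proof (Rabs_pos (z - c)).
    pose proof (Rabs_pos (-(sgnpow a (sin d) - sin d))).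
    assert (0 <= M) by (unfold M; lra). nra. }
  assert (B0 : forall z, -PI <= z <= PI -> Rabs (h z) <= 32*M).
  { intros z Hz. destruct (MVT_gen h 0 z h1) as [d [Hd Hd']].
    { intros t _. apply Hh. }
    { intros t _. apply (Cont _ _ _ (Hh t)). }
    rewrite H0, Rminus_0_r, Rminus_0_r in Hd'. rewrite Hd', Rabs_mult.
    assert (Hdd : -PI <= d <= PI).
    { split. apply Rle_trans with (Rmin 0 z); [apply Rmin_glb|]; lra.
      apply Rle_trans with (Rmax 0 z); [|apply Rmax_lub]; lra. }
    pose proof (B1 d Hdd). assert (Rabs z <= 4) by (apply Rabs_le; lra).
    pose proof (Rabs_pos z). pose proof (Rabs_pos (h1 d)).
    assert (0 <= M) by (unfold M; lra). nra. }
  assert (Hpz : forall z, h (z + 2*PI) = h z).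
  { intro z. unfold h. rewrite Hper, sin_plus, sin_2PI, cos_2PI. ring. }
  assert (Hp1 : forall z, h1 (z + 2*PI) = h1 z).
  { intro z. unfold h1. rewrite cos_plus, sin_2PI, cos_2PI.
    change (Derive psi (z + 2*PI)) with (Derive_n psi 1 (z + 2*PI)).
    rewrite <- Derive_n_comp_trans. simpl.
    rewrite (Derive_ext (fun y => psi (y + 2*PI)) psi) by (intro; apply Hper). ring. }
  assert (Q : forall z, Rabs (h z) <= 32*M /\ Rabs (h1 z) <= 8*M).
  { apply periodic_ext.
    - intros z Hz. split; [apply B0|apply B1]; auto.
    - intros z. rewrite Hpz, Hp1. auto.
    - intros z. rewrite Hpz, Hp1. auto. }
  intros x y.
  rewrite (is_derive_unique _ _ _ (Hh y)).
  destruct (Q x) as [Qa _]. destruct (Q y) as [_ Qb].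
  change (psi x - sin x) with (h x). unfold M in *. lra.
Qed.

Theorem mainTheorem14 :
  exists C : R, 0 < C /\
  forall alpha : R, 9 / 10 < alpha < 1 ->
    (forall (i : nat) (x : R), (i <= 3)%nat -> sin x <> 0 ->
       Rabs (Derive_n (omega_res alpha) i x) + Rabs (Derive_n (u_res alpha) i x)
       <= C * Rabs (alpha - 1) * Rpower (Rabs (sin x)) (kappa - INR i)) /\
    (forall psi : R -> R, is_psibar alpha psi ->
       forall x y : R,
         Rabs (psi x - sin x) + Rabs (Derive (fun t => psi t - sin t) y)
         <= C * Rabs (alpha - 1)) /\
    (forall x : R, - PI <= x <= PI -> x <> 0 -> x <> PI -> x <> - PI ->
       Rabs (gexpr alpha x) + Rabs (sin x * Derive (gexpr alpha) x)
       <= C * sqrt (Rabs (alpha - 1)) * Rabs x * Rpower (Rabs (sin x)) (alpha - 1)).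
Proof.
  exists 5000. split; [lra|]. intros alpha Ha.
  assert (Habs : Rabs (alpha - 1) = 1 - alpha) by (rewrite Rabs_left1 by lra; ring).
  split; [|split].
  - intros i x Hi Hs.
    pose proof (res_bound alpha x i ltac:(lra) Hs Hi) as H1.
    pose proof (res_bound ((1+alpha)/2) x i ltac:(lra) Hs Hi) as H2.
    unfold omega_res, omegabar, u_res, ubar. rewrite Habs.
    assert (0 <= Rpower (Rabs (sin x)) (kappa - INR i)) by (unfold Rpower; left; apply exp_pos).
    nra.
  - intros psi Hpsi x y. rewrite Habs.
    pose proof (psi_part alpha psi ltac:(lra) Hpsi x y). lra.
  - intros x Hx H0 H1 H2.
    pose proof (part2 alpha x Ha Hx H0 H1 H2) as H.
    assert (0 <= sqrt (Rabs (alpha - 1)) * Rabs x * Rpower (Rabs (sin x)) (alpha - 1)).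
    { apply Rmult_le_pos; [apply Rmult_le_pos|]. apply sqrt_pos. apply Rabs_pos.
      unfold Rpower; left; apply exp_pos. }
    nra.
Qed.
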